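(* Let $G$ be a graph and let $K$ be a clique of $G$ that is a block of $G$ and contains exactly one cut-vertex $c$ of $G$. Let $G_K$ be the graph obtained from $G$ by deleting all vertices of $K$ other than $c$. Then $p(G)=p(G_K)$.
   Context: All graphs are finite and simple. For an acyclic digraph $D$, the phylogeny graph $P(D)$ is the graph on $V(D)$ in which distinct vertices $u,v$ are adjacent if and only if $(u,v)\in A(D)$, or $(v,u)\in A(D)$, or there is a vertex $w$ with $(u,w),(v,w)\in A(D)$. A phylogeny digraph for a graph $G$ is an acyclic digraph $D$ such that $G$ is an induced subgraph of $P(D)$ and $D$ has no arc from a vertex of $V(D)\setminus V(G)$ to a vertex of $V(G)$. The phylogeny number $p(G)$ is the minimum of $|V(D)\setminus V(G)|$ over all phylogeny digraphs $D$ for $G$. *)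

(* Defs.v *)
From mathcomp Require Import all_boot.
Set Implicit Arguments. Unset Strict Implicit. Unset Printing Implicit Defensive.

(* A finite simple graph is a symmetric irreflexive relation e on a finType T. *)

Definition acyclic (V : finType) (a : rel V) : Prop :=
  forall x y, a x y -> ~~ connect a y x.

Definition phylo_adj (V : finType) (a : rel V) (u v : V) : bool :=
  (u != v) && [|| a u v, a v u | [exists w, a u w && a v w]].

(* D is a phylogeny digraph for G=(T,e) with vertex set V(G) + k new vertices. *)
Definition phylogeny_digraph (T : finType) (e : rel T) (k : nat)
    (a : rel (T + 'I_k)%type) : Prop :=
  [/\ acyclic a,
      (forall u v : T, u != v -> e u v = phylo_adj a (inl u) (inl v))
    & (forall (i : 'I_k) (u : T), ~~ a (inr i) (inl u))].

Definition has_phylogeny_digraph (T : finType) (e : rel T) (k : nat) : Prop :=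
  exists a : rel (T + 'I_k)%type, phylogeny_digraph e a.

Definition phylogeny_number (T : finType) (e : rel T) (k : nat) : Prop :=
  has_phylogeny_digraph e k /\ (forall j, has_phylogeny_digraph e j -> k <= j).

Definition restr (T : finType) (e : rel T) (S : {set T}) : rel T :=
  [rel x y | [&& x \in S, y \in S & e x y]].

Definition comp_of (T : finType) (e : rel T) (S : {set T}) (x : T) : {set T} :=
  [set y in S | connect (restr e S) x y].

Definition ncomp (T : finType) (e : rel T) (S : {set T}) : nat :=
  #|[set comp_of e S x | x in S]|.

Definition connected_in (T : finType) (e : rel T) (S : {set T}) : bool :=
  (S != set0) && [forall x in S, forall y in S, connect (restr e S) x y].

Definition cut_vertex_in (T : finType) (e : rel T) (S : {set T}) (c : T) : bool :=
  (c \in S) && (ncomp e S < ncomp e (S :\ c)).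

Definition cut_vertex (T : finType) (e : rel T) (c : T) : bool :=
  cut_vertex_in e setT c.

Definition block_cond (T : finType) (e : rel T) (S : {set T}) : bool :=
  connected_in e S && [forall x, ~~ cut_vertex_in e S x].

Definition is_block (T : finType) (e : rel T) (B : {set T}) : Prop :=
  block_cond e B /\ (forall B' : {set T}, B \subset B' -> block_cond e B' -> B' = B).

Definition clique (T : finType) (e : rel T) (K : {set T}) : Prop :=
  forall x y, x \in K -> y \in K -> x != y -> e x y.

Definition induced (T : finType) (e : rel T) (S : {set T}) : rel {x : T | x \in S} :=
  fun x y => e (val x) (val y).
Arguments induced [T] e S.
Arguments phylogeny_number [T] e k.

(* Main.v *)
Require Import Defs.
From mathcomp Require Import all_boot.
Set Implicit Arguments. Unset Strict Implicit. Unset Printing Implicit Defensive.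

Lemma restr_sym (T : finType) (e : rel T) (S : {set T}) :
  symmetric e -> symmetric (restr e S).
Proof. by move=> es x y; rewrite /restr /= es andbCA. Qed.

Lemma con_sym (T : finType) (e : rel T) (S : {set T}) x y :
  symmetric e -> connect (restr e S) x y = connect (restr e S) y x.
Proof. by move=> es; apply: sym_connect_sym; apply: restr_sym. Qed.

Lemma con_mono (T : finType) (e : rel T) (A B : {set T}) x y :
  A \subset B -> connect (restr e A) x y -> connect (restr e B) x y.
Proof.
move=> AB; apply: connect_sub => u v /= /and3P[uA vA euv].
by apply: connect1; rewrite /restr /= (subsetP AB _ uA) (subsetP AB _ vA).
Qed.

Lemma con_edge (T : finType) (e : rel T) (S : {set T}) x y :
  x \in S -> y \in S -> e x y -> connect (restr e S) x y.
Proof. by move=> xS yS exy; apply: connect1; rewrite /restr /= xS yS. Qed.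

Lemma comp_eq (T : finType) (e : rel T) (S : {set T}) x y :
  symmetric e -> connect (restr e S) x y -> comp_of e S x = comp_of e S y.
Proof.
move=> es cxy; apply/setP => w; rewrite !inE; case: (w \in S) => //=.
apply/idP/idP => H; first by apply: connect_trans H; rewrite con_sym.
exact: connect_trans cxy H.
Qed.

Lemma ncomp_le1 (T : finType) (e : rel T) (A : {set T}) :
  (forall u v, u \in A -> v \in A -> connect (restr e A) u v) -> ncomp e A <= 1.
Proof.
move=> H; rewrite /ncomp -(cards1 A); apply: subset_leq_card.
apply/subsetP => X /imsetP[u uA ->]; rewrite inE; apply/eqP/setP => w.
rewrite !inE; case wA: (w \in A) => //=; exact: H.
Qed.

Lemma ncomp_gt0 (T : finType) (e : rel T) (A : {set T}) u :
  u \in A -> 0 < ncomp e A.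
Proof. by move=> uA; rewrite /ncomp card_gt0; apply/set0Pn; exists (comp_of e A u); apply: imset_f. Qed.

Lemma ncomp_le1_con (T : finType) (e : rel T) (A : {set T}) u v :
  ncomp e A <= 1 -> u \in A -> v \in A -> connect (restr e A) u v.
Proof.
move=> H uA vA.
have: comp_of e A u = comp_of e A v.
  apply/eqP; apply: contraLR H => neq; rewrite -ltnNge /ncomp.
  rewrite (cardsD1 (comp_of e A u)) imset_f // add1n ltnS card_gt0.
  apply/set0Pn; exists (comp_of e A v); rewrite !inE eq_sym neq /=; exact: imset_f.
by move/setP/(_ v); rewrite !inE vA /= connect0 => ->.
Qed.

Lemma noncut_conn (T : finType) (e : rel T) x y c :
  symmetric e -> y != x -> c != x -> e x y -> e x c -> ~~ cut_vertex e x ->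
  connect (restr e (setT :\ x)) y c.
Proof.
move=> es yx cx exy exc ncut; apply: contraNT ncut => nyc.
rewrite /cut_vertex /cut_vertex_in inE /=.
set D := setT :\ x.
set F := comp_of e setT. set F' := comp_of e D.
have yD : y \in D by rewrite !inE yx.
have cD : c \in D by rewrite !inE cx.
have conT : forall u v, connect (restr e setT) u v -> F u = F v.
  by move=> u v; apply: comp_eq.
have Fxy : F x = F y by apply: conT; apply: con_edge; rewrite ?inE.
have E1 : [set F z | z in setT] = [set F z | z in D].
  apply/setP => X; apply/imsetP/imsetP => [[z _ ->]|[z zD ->]]; last by exists z.
  case: (z =P x) => [->|/eqP zx]; first by exists y.
  by exists z => //; rewrite !inE zx.
set h := fun C : {set T} => F (odflt x [pick z in C]).
have hF : {in D, forall z, h (F' z) = F z}.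
  move=> z zD; rewrite /h.
  case: pickP => [w|]; last by move/(_ z); rewrite /F' /comp_of in_set zD connect0.
  rewrite /F' /comp_of inE => /andP[_ czw] /=; apply/esym/conT.
  by apply: con_mono czw; apply: subsetT.
have E2 : [set F z | z in D] = [set h C | C in [set F' z | z in D]].
  by rewrite -imset_comp; apply: eq_in_imset => z zD /=; rewrite hF.
rewrite /ncomp E1 E2 ltn_neqAle leq_imset_card andbT.
apply/negP => /imset_injP inj.
have : F' y = F' c.
  by apply: inj; rewrite ?imset_f // hF // hF // -Fxy; apply: conT; apply: con_edge; rewrite ?inE.
move/setP/(_ c); rewrite /F' /comp_of.
by rewrite !in_set connect0 (negbTE nyc) andbF andbT !inE cx.
Qed.


Lemma path_con (T : finType) (e : rel T) (A : {set T}) h s :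
  path e h s -> {subset h :: s <= A} ->
  forall v, v \in h :: s -> connect (restr e A) h v.
Proof.
elim: s h => [|h' s IH] h /=.
  by move=> _ _ v; rewrite inE => /eqP ->; apply: connect0.
move=> /andP[ehh' p] sub v; rewrite inE => /orP[/eqP->|vin]; first exact: connect0.
apply: (connect_trans (y := h')); first by apply: con_edge => //; apply: sub; rewrite !inE eqxx ?orbT.
apply: IH => // w win; apply: sub; by rewrite inE win orbT.
Qed.

Lemma path_split_con (T : finType) (e : rel T) (A : {set T}) h s v :
  symmetric e -> path e h s -> uniq (h :: s) ->
  (forall w w', w \in h :: s -> w' \in h :: s -> w \notin A -> w' \notin A -> w = w') ->
  v \in h :: s -> v \in A ->
  (h \in A) && connect (restr e A) v h || (last h s \in A) && connect (restr e A) v (last h s).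
Proof.
move=> es; elim: s h => [|h' s IH] h /=.
  by move=> _ _ _; rewrite inE => /eqP -> ->; rewrite connect0.
move=> /andP[ehh' p] /andP[hn u] am1 vin vA.
case: (v =P h) => [vh|/eqP vh]; first by rewrite -vh vA connect0.
have vin' : v \in h' :: s by move: vin; rewrite inE (negbTE vh).
have am1' : forall w w', w \in h' :: s -> w' \in h' :: s -> w \notin A -> w' \notin A -> w = w'.
  by move=> w w' wi w'i; apply: am1; rewrite inE ?wi ?w'i orbT.
case/orP: (IH h' p u am1' vin' vA) => [/andP[h'A cvh']|->]; last by rewrite orbT.
case hA: (h \in A).
  rewrite /=; apply/orP; left; apply: connect_trans cvh' _.
  by apply: con_edge => //; rewrite es.
have allA : {subset h' :: s <= A}.
  move=> w wi; apply/negPn/negP => wA.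
  have := am1 w h; rewrite inE wi orbT mem_head hA => /(_ isT isT wA isT) wh.
  by move: hn; rewrite -wh wi.
apply/orP; right; rewrite (allA _ (mem_last _ _)) /=.
apply: connect_trans cvh' _; exact: path_con p allA _ (mem_last _ _).
Qed.

Lemma split_first (T : eqType) (a : pred T) (s : seq T) :
  has a s -> exists s1 k s2, [/\ s = s1 ++ k :: s2, a k & ~~ has a s1].
Proof.
elim: s => [|h s IH] //= /orP[ah|hs]; first by exists [::], h, s.
case: (boolP (a h)) => ah; first by exists [::], h, s.
have [s1 [k [s2 [-> ak ns1]]]] := IH hs.
by exists (h :: s1), k, s2; rewrite /= (negbTE ah).
Qed.

Lemma ear_block (T : finType) (e : rel T) (K : {set T}) x k y p1 :
  symmetric e -> clique e K -> x \in K -> k \in K -> x != k ->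
  path e y p1 -> uniq (y :: p1) -> (forall w, w \in y :: p1 -> w \notin K) ->
  e x y -> e (last y p1) k ->
  block_cond e (K :|: [set w | w \in y :: p1]).
Proof.
move=> es cK xK kK xk pth uq nK exy elk.
set q := y :: p1. set S := K :|: [set w | w \in q].
have yq : y \in q by rewrite mem_head.
have inS : forall w, (w \in S) = (w \in K) || (w \in q) by move=> w; rewrite /S in_setU in_set.
have yS : y \in S by rewrite inS yq orbT.
have core : forall A : {set T}, A \subset S ->
    (forall w w', w \in S -> w' \in S -> w \notin A -> w' \notin A -> w = w') ->
    forall u v, u \in A -> v \in A -> connect (restr e A) u v.
  move=> A AS am1.
  have KK : forall a b, a \in K -> b \in K -> a \in A -> b \in A -> connect (restr e A) a b.
    move=> a b aK bK aA bA; case: (a =P b) => [->|/eqP ab]; first exact: connect0.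
    by apply: con_edge => //; apply: cK.
  have toK : forall v, v \in A -> exists2 kv, kv \in K & (kv \in A) && connect (restr e A) v kv.
    move=> v vA; case vK: (v \in K); first by exists v => //; rewrite vA connect0.
    have vq : v \in q by move: (subsetP AS _ vA); rewrite inS vK.
    have xS : x \in S by rewrite inS xK.
    have kS : k \in S by rewrite inS kK.
    case: (boolP (all (mem A) q)) => [/allP allq|].
      have sq : {subset q <= A} by move=> w /allq.
      have cyv := path_con pth sq vq.
      have cyl := path_con pth sq (mem_last y p1).
      case xA: (x \in A).
        exists x => //; rewrite xA /=; rewrite con_sym // in cyv.
        by apply: connect_trans cyv _; apply: con_edge => //; [exact: sq | rewrite es].
      have kA : k \in A.
        apply/negPn/negP => kA; move/eqP: xk; apply; apply: am1 => //; by rewrite xA.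
      exists k => //; rewrite kA /=; rewrite con_sym // in cyv.
      apply: connect_trans cyv _; apply: connect_trans cyl _.
      by apply: con_edge => //; apply: sq; apply: mem_last.
    case/allPn => w wq /= wA.
    have wS : w \in S by rewrite inS wq orbT.
    have inA : forall a, a \in K -> a \in A.
      move=> a aK; apply/negPn/negP => aA.
      have := am1 a w; rewrite inS aK wS => /(_ isT isT aA wA) aw.
      by move: (nK w wq); rewrite -aw aK.
    have am1q : forall w w', w \in q -> w' \in q -> w \notin A -> w' \notin A -> w = w'.
      by move=> w1 w2 w1q w2q; apply: am1; rewrite inS ?w1q ?w2q orbT.
    case/orP: (path_split_con es pth uq am1q vq vA) => /andP[hA cv].
      exists x => //; rewrite inA //=; apply: connect_trans cv _.
      by apply: con_edge => //; [exact: inA | rewrite es].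
    exists k => //; rewrite inA //=; apply: connect_trans cv _.
    by apply: con_edge => //; exact: inA.
  move=> u v uA vA.
  have [ku kuK /andP[kuA cu]] := toK u uA.
  have [kv kvK /andP[kvA cv]] := toK v vA.
  apply: connect_trans cu _; apply: connect_trans (KK _ _ kuK kvK kuA kvA) _.
  by rewrite con_sym.
apply/andP; split.
  apply/andP; split; first by apply/set0Pn; exists y.
  apply/forallP => u; apply/implyP => uS; apply/forallP => v; apply/implyP => vS.
  apply: core => //; last by move=> w w' ->.
apply/forallP => z; rewrite /cut_vertex_in; case zS: (z \in S) => //=.
rewrite -leqNgt; apply: (@leq_trans 1); last exact: ncomp_gt0 yS.
apply: ncomp_le1; apply: core; first exact: subD1set.
move=> w w' wS w'S; rewrite !in_setD1 wS w'S !andbT !negbK.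
by move=> /eqP -> /eqP ->.
Qed.

Lemma nbr_in_K (T : finType) (e : rel T) (K : {set T}) c x y :
  symmetric e -> clique e K -> is_block e K -> c \in K -> x \in K -> x != c ->
  ~~ cut_vertex e x -> e x y -> y \in K.
Proof.
move=> es cK bK cKin xK xc ncut exy; apply/negPn/negP => yK.
have yx : y != x by apply: contraNneq yK => ->.
have exc : e x c by apply: cK.
have cy : c != y by apply: contraNneq yK => <-.
have cx : c != x by rewrite eq_sym.
have := noncut_conn es yx cx exy exc ncut.
case/connectP => p0 pth0; case: (shortenP pth0) => p pth uq _ clast.
have cp : c \in p.
  by move: (mem_last y p); rewrite -clast inE (negbTE cy).
have hK : has (mem K) p by apply/hasP; exists c.
have [p1 [k [p2 [ep kK np1]]]] := split_first hK.
rewrite ep in pth uq.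
move: pth; rewrite cat_path /= => /and3P[pth1 /and3P[_ kD elk] _].
have kx : x != k by move: kD; rewrite !inE eq_sym => /andP[].
have pth1' : path e y p1.
  by apply: sub_path pth1 => u v /and3P[].
have uq1 : uniq (y :: p1) by move: uq; rewrite -cat_cons cat_uniq => /andP[].
have nK : forall w, w \in y :: p1 -> w \notin K.
  move=> w; rewrite inE => /orP[/eqP -> //|wp].
  by apply: contra np1 => wK; apply/hasP; exists w.
have blk := ear_block es cK xK kK kx pth1' uq1 nK exy elk.
have := (proj2 bK) _ (subsetUl K _) blk => /setP /(_ y).
by rewrite inE (negbTE yK) inE mem_head.
Qed.


Lemma phylo_adjC (V : finType) (a : rel V) u v : phylo_adj a u v = phylo_adj a v u.
Proof.
rewrite /phylo_adj eq_sym; congr (_ && _); rewrite orbCA; congr (_ || (_ || _)).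
by apply/existsP/existsP => -[w /andP[h1 h2]]; exists w; rewrite h1 h2.
Qed.

Lemma connect_homo (A B : finType) (r : rel A) (s : rel B) (f : A -> B) :
  (forall x y, r x y -> s (f x) (f y)) -> forall x y, connect r x y -> connect s (f x) (f y).
Proof.
move=> H x y /connectP [p pth ->]; elim: p x pth => [|z p IH] x /=; first by rewrite connect0.
by move=> /andP[rxz pth]; apply: connect_trans (connect1 (H _ _ rxz)) (IH _ pth).
Qed.

Lemma connect_inv (A : finType) (r : rel A) (P : A -> Prop) :
  (forall x y, P x -> r x y -> P y) -> forall x y, connect r x y -> P x -> P y.
Proof.
move=> H x y /connectP [p pth ->]; elim: p x pth => [|z p IH] x //=.
by move=> /andP[rxz pth] Px; apply: (IH z pth); apply: H Px rxz.
Qed.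

Definition emb (T : finType) (S : {set T}) k (X : {x : T | x \in S} + 'I_k) : T + 'I_k :=
  match X with inl u => inl (val u) | inr i => inr i end.

Lemma restrict_phylo (T : finType) (e : rel T) (K : {set T}) c k :
  symmetric e -> c \in K ->
  (forall x y, x \in K :\ c -> e x y -> y \in K) ->
  has_phylogeny_digraph e k -> has_phylogeny_digraph (induced e (~: (K :\ c))) k.
Proof.
move=> es cK NK [a [acy adj noin]].
set S := ~: (K :\ c).
exists (fun X Y => a (emb X) (emb Y)); split.
- move=> X Y aXY; apply/negP => cYX.
  have := connect_homo (s := a) (f := @emb T S k) (fun x y h => h) cYX.
  by apply/negP; apply: acy.
- move=> u v uv; rewrite /induced adj; last by rewrite (inj_eq val_inj).
  have ne1 : inl (sval u) != inl (sval v) :> (T + 'I_k)%type.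
    by apply/eqP => -[] /val_inj /eqP; rewrite (negbTE uv).
  rewrite /phylo_adj ne1 /=; congr (_ || (_ || _)).
  apply/existsP/existsP => [[w /andP[h1 h2]]|[w /andP[h1 h2]]].
    case: w h1 h2 => [t|i] h1 h2; last by exists (inr i); rewrite h1 h2.
    case: (boolP (t \in S)) => tS; first by exists (inl (Sub t tS)); rewrite /= h1 h2.
    have toc : forall z : {x : T | x \in S}, a (inl (val z)) (inl t) -> val z = c.
      move=> z h; have zt : val z != t by apply: contraNneq tS => <-; apply: valP.
      have ezt : e (val z) t by rewrite adj // /phylo_adj zt h.
      have tR : t \in K :\ c by move: tS; rewrite inE negbK.
      have zK := NK t (val z) tR; rewrite es in zK; have {}zK := zK ezt.
      by have := valP z; rewrite /S !inE zK andbT negbK => /eqP.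
    by move: uv; rewrite -(inj_eq val_inj) (toc _ h1) (toc _ h2) eqxx.
  by exists (emb w); rewrite h1 h2.
- by move=> i u; apply: noin.
Qed.

Definition gmap (T : finType) (S : {set T}) k (X : T + 'I_k) : option ({x : T | x \in S} + 'I_k) :=
  match X with inl s => omap inl (insub s) | inr i => Some (inr i) end.

Definition rk (T : finType) k (X : T + 'I_k) : nat :=
  match X with inl s => enum_rank s | inr _ => 0 end.

Definition ext_rel (T : finType) (S : {set T}) (c : T) k
  (a' : rel ({x : T | x \in S} + 'I_k)) : rel (T + 'I_k) :=
  fun X Y => match gmap S X, gmap S Y with
  | Some X', Some Y' => a' X' Y'
  | Some X', None => if X' is inl u then val u == c else false
  | None, None => rk X < rk Y
  | None, Some _ => false
  end.

Lemma gmap_emb (T : finType) (S : {set T}) k X : gmap S (@emb T S k X) = Some X.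
Proof. by case: X => [u|i] //=; rewrite valK. Qed.

Lemma gmap_inl (T : finType) (S : {set T}) k s :
  (s \notin S /\ gmap S (inl s : T + 'I_k) = None) \/
  (exists u, [/\ val u = s, s \in S & gmap S (inl s : T + 'I_k) = Some (inl u)]).
Proof.
rewrite /gmap; case: insubP => [u sS vu|nS] /=; last by left.
by right; exists u.
Qed.

Lemma extend_phylo (T : finType) (e : rel T) (K : {set T}) c k :
  symmetric e -> clique e K -> c \in K ->
  (forall x y, x \in K :\ c -> e x y -> y \in K) ->
  has_phylogeny_digraph (induced e (~: (K :\ c))) k -> has_phylogeny_digraph e k.
Proof.
move=> es cK cKin NK [a' [acy adj noin]].
set S := ~: (K :\ c).
set a := ext_rel c a'.
have N1 : forall X Y, gmap S X = None -> a X Y -> gmap S Y = None /\ rk X < rk Y.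
  by move=> X Y gX; rewrite /a /ext_rel gX; case: (gmap S Y).
exists a; split.
- move=> X Y aXY; apply/negP => cYX.
  case gX: (gmap S X) => [X'|].
    case gY: (gmap S Y) => [Y'|].
      have aXY' : a' X' Y' by move: aXY; rewrite /a /ext_rel gX gY.
      pose P z : Prop := if gmap S z is Some z' then connect a' Y' z' else true.
      have := connect_inv (P := P) _ cYX; rewrite /P gX gY => /(_ _ (connect0 _ _)).
      have : forall x y, P x -> a x y -> P y.
        move=> x y; rewrite /P /a /ext_rel.
        case: (gmap S x) => [x'|]; case: (gmap S y) => [y'|] //.
        by move=> cx axy; apply: connect_trans cx (connect1 axy).
      move=> H /(_ H) cYX'; by move: (acy _ _ aXY'); rewrite cYX'.
    have := connect_inv (P := fun z => gmap S z = None) _ cYX gY; rewrite gX.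
    by move=> /(_ (fun x y h axy => (N1 x y h axy).1)).
  have [gY ltXY] := N1 _ _ gX aXY.
  have := connect_inv (P := fun z => gmap S z = None /\ rk Y <= rk z) _ cYX.
  have H : forall x y, gmap S x = None /\ rk Y <= rk x -> a x y -> gmap S y = None /\ rk Y <= rk y.
    move=> x y [gx le] axy; have [gy lt] := N1 _ _ gx axy; split => //.
    by apply: leq_trans le (ltnW lt).
  move=> /(_ H (conj gY (leqnn _))) [_]; by rewrite leqNgt ltXY.
- have ne : forall s t : T, s != t -> inl s != inl t :> (T + 'I_k)%type.
    by move=> s t st; apply/eqP => -[] /eqP; rewrite (negbTE st).
  have mixed : forall s t, s \in K :\ c -> t \in S -> e s t = phylo_adj a (inl s) (inl t).
    move=> s t sR tS.
    have st : s != t by apply: contraTneq tS => <-; rewrite inE negbK.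
    have gs : gmap S (inl s : T + 'I_k) = None.
      case: (gmap_inl S k s) => [[] //|[u [_ sS _]]].
      by move: sS; rewrite inE sR.
    case: (gmap_inl S k t) => [[]|[v [vt _ gt]]]; first by rewrite tS.
    have Est : e s t = (t == c).
      have /setD1P[sc sK] := sR.
      apply/idP/eqP => [h|->]; last by apply: cK.
      have tK := NK s t sR h.
      by move: tS; rewrite !inE tK andbT negbK => /eqP.
    rewrite Est /phylo_adj (ne _ _ st) /=.
    have a1 : a (inl s) (inl t) = false by rewrite /a /ext_rel gs gt.
    have a2 : a (inl t) (inl s) = (t == c) by rewrite /a /ext_rel gs gt vt.
    rewrite a1 a2 /=; apply/idP/idP => [->//|/orP[//|/existsP[w /andP[h1 h2]]]].
    move: h1 h2; rewrite /a /ext_rel gs gt; case: (gmap S w) => [w'|] //.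
    by rewrite vt.
  move=> s t st.
  case: (gmap_inl S k s) => [[sS gs]|[u [us sS gs]]];
    case: (gmap_inl S k t) => [[tS gt]|[v [vt tS gt]]].
  + have sR : s \in K :\ c by move: sS; rewrite inE negbK.
    have tR : t \in K :\ c by move: tS; rewrite inE negbK.
    have -> : e s t by apply: cK => //; [move/setD1P: sR => [] | move/setD1P: tR => []].
    rewrite /phylo_adj (ne _ _ st) /= /a /ext_rel gs gt /=.
    have : enum_rank s != enum_rank t by rewrite (inj_eq enum_rank_inj).
    by rewrite neq_ltn => /orP[->|->]; rewrite ?orbT.
  + by apply: mixed => //; move: sS; rewrite inE negbK.
  + by rewrite es phylo_adjC; apply: mixed => //; move: tS; rewrite inE negbK.
  + have uv : u != v by apply: contra st; rewrite -us -vt => /eqP ->.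
    have := adj u v uv; rewrite /induced us vt => ->.
    rewrite /phylo_adj (ne _ _ st) /=; case: eqP => [[] /eqP|_]; first by rewrite (negbTE uv).
    rewrite /= {1 2}/a /ext_rel gs gt; congr (_ || (_ || _)).
    apply/existsP/existsP => [[w' /andP[h1 h2]]|[w /andP[h1 h2]]].
      by exists (emb w'); rewrite /a /ext_rel gs gt gmap_emb h1 h2.
    move: h1 h2; rewrite /a /ext_rel gs gt; case: (gmap S w) => [w'|] h1 h2.
      by exists w'; rewrite h1 h2.
    by move: st; rewrite -us -vt (eqP h1) (eqP h2) eqxx.
- move=> i u; rewrite /a /ext_rel.
  case: (gmap_inl S k u) => [[_ ->]|[v [_ _ ->]]] //.
  exact: noin.
Qed.

Theorem mainTheorem5 (T : finType) (e : rel T)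
    (e_sym : symmetric e) (e_irr : irreflexive e)
    (K : {set T}) (c : T) :
  clique e K -> is_block e K ->
  c \in K -> cut_vertex e c ->
  (forall x, x \in K -> cut_vertex e x -> x = c) ->
  forall p : nat,
    phylogeny_number e p <-> phylogeny_number (induced e (~: (K :\ c))) p.
Proof.
move=> cK bK cKin ccut onlyc p.
have NK : forall x y, x \in K :\ c -> e x y -> y \in K.
  move=> x y /setD1P[xc xK] exy; apply: (nbr_in_K e_sym cK bK cKin xK xc) exy.
  by apply/negP => cx; move: xc; rewrite (onlyc x xK cx) eqxx.
split => -[h min]; split.
- exact: restrict_phylo.
- by move=> j hj; apply: min; apply: extend_phylo hj.
- exact: extend_phylo h.
- by move=> j hj; apply: min; apply: restrict_phylo hj.
Qed.
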